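(* Let $R=k\{x_1,\ldots,x_n;\,Q,\preceq\}$ be a PBW algebra and $M$ an $R$-subbimodule of $R^s$. Suppose there exist $p,q\ge1$ and a matrix $H=\begin{pmatrix}H_1\\ H_2\end{pmatrix}\in M_{(s+p)\times q}(R)$ with $H_1\in M_{s\times q}(R)$, $H_2\in M_{p\times q}(R)$ such that (i) $(\mathfrak m^s(\mathbf h)\otimes\mathbf1)H_1=\mathbf hH_1$ for all $\mathbf h\in(R^{\rm env})^s$, and (ii) $M=\{\mathbf h\in R^s:\ \exists\,\mathbf h''\in(R^{\rm env})^p$ with $(\mathbf h\otimes\mathbf1,\mathbf h'')\in\mathrm{Syz}(H)\}$. Write each $\mathbf h\in(R^{\rm env})^{s+p}$ as $\mathbf h=(\mathbf h',\mathbf h'')$ with $\mathbf h'\in(R^{\rm env})^s$, $\mathbf h''\in(R^{\rm env})^p$. Then: (1) if $\{\mathbf h_1,\ldots,\mathbf h_t\}\subseteq(R^{\rm env})^{s+p}$ generates $\mathrm{Syz}(H)$ as an $R$-bimodule, then $M={}_R\langle\mathfrak m^s(\mathbf h_1'),\ldots,\mathfrak m^s(\mathbf h_t')\rangle_R$; (2) if moreover $\{\mathbf h_1,\ldots,\mathbf h_t\}$ is a left Gröbner basis of the left $R^{\rm env}$-module $\mathrm{Syz}(H)$ with respect to POT on $(R^{\rm env})^{s+p}$ built from any one of $\preceq^*,\preceq^c,\preceq_*,\preceq_c$ on $\mathbb N^{2n}$, then $\{\mathfrak m^s(\mathbf h_1'),\ldots,\mathfrak m^s(\mathbf h_t')\}\setminus\{0\}$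 is a two-sided Gröbner basis of $M$ with respect to POT on $R^s$ built from $\preceq$.
   Context: $k$ is a field; $x^\alpha=x_1^{\alpha_1}\cdots x_n^{\alpha_n}$. A PBW algebra $R=k\{x_1,\ldots,x_n;Q,\preceq\}$ is a quotient of $k\langle x_1,\ldots,x_n\rangle$ by the two-sided ideal generated by $Q=\{x_jx_i-q_{ji}x_ix_j-p_{ji};\,i<j\}$, $q_{ji}\in k^*$, each $p_{ji}$ a combination of standard monomials with exponents $\prec\epsilon_i+\epsilon_j$ for an admissible order $\preceq$ (total, compatible with addition, $0$ minimal), such that the standard monomials form a $k$-basis. $R^{\rm env}=R\otimes_kR^{\rm op}$ is the PBW algebra in the variables $x_1\otimes1,\ldots,x_n\otimes1,1\otimes x_n,\ldots,1\otimes x_1$ (in this order); exponent $(\alpha,\beta)\in\mathbb N^{2n}$ corresponds to $x^\alpha\otimes x^{\beta^{\rm op}}$, $\beta^{\rm op}=(\beta_n,\ldots,\beta_1)$. With $\alpha\preceq^{\rm op}\beta$ iff $\alpha^{\rm op}\preceq\beta^{\rm op}$: $(\alpha,\beta)\prec^*(\gamma,\delta)$ iff $\beta\prec^{\rm op}\delta$ or ($\beta=\delta$, $\alpha\prec\gamma$); $(\alpha,\beta)\prec_*(\gamma,\delta)$ iff $\alpha\prec\gamma$ or ($\alpha=\gamma$, $\beta\prec^{\rm op}\delta$); $(\alpha,\beta)\prec^c(\gamma,\delta)$ iff $\alpha+\beta^{\rm op}\prec\gamma+\delta^{\rm op}$ or (equality and $\beta^{\rm op}\prec\delta^{\rm op}$);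 $(\alpha,\beta)\prec_c(\gamma,\delta)$ iff $\alpha+\beta^{\rm op}\prec\gamma+\delta^{\rm op}$ or (equality and $\alpha\prec\gamma$). For an admissible order $\le$ on $\mathbb N^m$, POT on $\mathbb N^m\times\{1,\ldots,s\}$ is: $(\alpha,i)<(\beta,j)$ iff $i>j$, or $i=j$ and $\alpha<\beta$. For $A=R$ or $R^{\rm env}$, a nonzero $\mathbf f=\sum c_{(\alpha,i)}x^\alpha\mathbf e_i\in A^s$ has $\exp(\mathbf f)$ the largest index with nonzero coefficient; $\mathrm{Exp}(L)=\{\exp(\mathbf f):0\ne\mathbf f\in L\}$; $(\alpha,i)+\mathbb N^m=\{(\alpha+\gamma,i)\}$. A finite $G\subseteq L\setminus\{0\}$ is a left Gröbner basis of a left submodule $L\subseteq A^s$ if $L={}_A\langle G\rangle$ and $\mathrm{Exp}(L)=\bigcup_{\mathbf g\in G}(\exp(\mathbf g)+\mathbb N^m)$; a finite $G\subseteq M\setminus\{0\}$ is a two-sided Gröbner basis of an $R$-subbimodule $M\subseteq R^s$ if $M={}_R\langle G\rangle_R$ and $\mathrm{Exp}(M)=\bigcup_{\mathbf g\in G}(\exp(\mathbf g)+\mathbb N^n)$. $R^q$ is a left $R^{\rm env}$-module via $(r\otimes r')\mathbf f=(rf_1r',\ldots,rf_qr')$; each $(R^{\rm env})^m$ is an $R$-bimodule via $r(a\otimes b)r'=ra\otimes br'$ (coinciding with left multiplication by $R^{\rm env}$). For $\mathbf f=(f_i),\mathbf g=(g_i)\in R^s$, $\mathbf f\otimes\mathbf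 g=(f_i\otimes g_i)_i$ and $\mathbf 1=(1,\ldots,1)$. $\mathfrak m^s:(R^{\rm env})^s\to R^s$ applies $\mathfrak m(r\otimes r')=rr'$ coordinatewise. For a matrix $H\in M_{m\times q}(R)$ with rows $\mathbf r_1,\ldots,\mathbf r_m\in R^q$ and $\mathbf h=(h_1,\ldots,h_m)\in(R^{\rm env})^m$, $\mathbf hH=\sum_ih_i\mathbf r_i\in R^q$, and the syzygy bimodule $\mathrm{Syz}(H)$ is the kernel of $(R^{\rm env})^m\to R^q$, $\mathbf h\mapsto\mathbf hH$. *)

(* Defs.v *)
From HB Require Import structures.
From mathcomp Require Import all_boot all_order all_algebra.
Set Implicit Arguments. Unset Strict Implicit. Unset Printing Implicit Defensive.
Import GRing.Theory.
Local Open Scope ring_scope.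

Definition expo (n : nat) := {ffun 'I_n -> nat}.
Definition addE {n} (a b : expo n) : expo n := [ffun i => (a i + b i)%N].
Definition zeroE {n} : expo n := [ffun _ => 0%N].
Definition epsE {n} (i : 'I_n) : expo n := [ffun j => if j == i then 1%N else 0%N].
Definition revE {n} (a : expo n) : expo n := [ffun i => a (rev_ord i)].

Definition admissible {n} (le : expo n -> expo n -> Prop) : Prop :=
  (forall a, le a a) /\
  (forall a b, le a b -> le b a -> a = b) /\
  (forall a b c, le a b -> le b c -> le a c) /\
  (forall a b, le a b \/ le b a) /\
  (forall a b c, le a b -> le (addE a c) (addE b c)) /\
  (forall a, le zeroE a).

Definition strict {E : Type} (le : E -> E -> Prop) (a b : E) : Prop := le a b /\ a <> b.

Section EnvOrders.
Variables (n : nat) (le : expo n -> expo n -> Prop).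
Let lt := strict le.
Let lt_op (a b : expo n) := lt (revE a) (revE b).
Definition star_lt (x y : expo n * expo n) : Prop :=
  lt_op x.2 y.2 \/ (x.2 = y.2 /\ lt x.1 y.1).
Definition lowstar_lt (x y : expo n * expo n) : Prop :=
  lt x.1 y.1 \/ (x.1 = y.1 /\ lt_op x.2 y.2).
Definition c_lt (x y : expo n * expo n) : Prop :=
  lt (addE x.1 (revE x.2)) (addE y.1 (revE y.2)) \/
  (addE x.1 (revE x.2) = addE y.1 (revE y.2) /\ lt (revE x.2) (revE y.2)).
Definition lowc_lt (x y : expo n * expo n) : Prop :=
  lt (addE x.1 (revE x.2)) (addE y.1 (revE y.2)) \/
  (addE x.1 (revE x.2) = addE y.1 (revE y.2) /\ lt x.1 y.1).
End EnvOrders.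

Section Alg.
Variable k : fieldType.

(* e is a k-basis of V and cf v i is the i-th coordinate of v *)
Definition coord_basis {V : lmodType k} {I : eqType} (e : I -> V) (cf : V -> I -> k) : Prop :=
  (forall v, exists s : seq I, [/\ uniq s,
      v = \sum_(i <- s) cf v i *: e i & forall i, i \notin s -> cf v i = 0]) /\
  (forall (s : seq I) (c : I -> k), uniq s -> forall i,
      cf (\sum_(j <- s) c j *: e j) i = if i \in s then c i else 0).

Definition mono {R : algType k} {n} (x : 'I_n -> R) (a : expo n) : R :=
  \prod_(i < n) x i ^+ a i.

Definition is_PBW {R : algType k} {n} (x : 'I_n -> R) (q : 'I_n -> 'I_n -> k)
  (pp : 'I_n -> 'I_n -> R) (le : expo n -> expo n -> Prop) (cf : R -> expo n -> k) : Prop :=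
  [/\ admissible le,
      coord_basis (mono x) cf &
      forall i j : 'I_n, (i < j)%N ->
        [/\ q j i != 0,
            x j * x i = q j i *: (x i * x j) + pp j i &
            forall a, cf (pp j i) a != 0 -> strict le a (addE (epsE i) (epsE j))]].

(* Renv together with tens is the k-algebra R (x)_k R^op, with
   tens a b = a (x) b; cf2 gives coordinates in the basis x^a (x) x^b. *)
Definition is_env {R Renv : algType k} {n} (x : 'I_n -> R) (tens : R -> R -> Renv)
  (cf2 : Renv -> expo n * expo n -> k) : Prop :=
  (forall a b c, tens (a + b) c = tens a c + tens b c) /\
  (forall a b c, tens a (b + c) = tens a b + tens a c) /\
  (forall (z : k) a b, tens (z *: a) b = z *: tens a b) /\
  (forall (z : k) a b, tens a (z *: b) = z *: tens a b) /\
  (forall a b c d, tens a b * tens c d = tens (a * c) (d * b)) /\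
  tens 1 1 = 1 /\
  coord_basis (fun ab : expo n * expo n => tens (mono x ab.1) (mono x ab.2)) cf2.

Definition is_mult {R Renv : algType k} (tens : R -> R -> Renv) (mm : {linear Renv -> R}) : Prop :=
  forall a b, mm (tens a b) = a * b.

End Alg.

Section Rows.
Variables (k : fieldType) (R Renv : algType k) (tens : R -> R -> Renv) (mm : Renv -> R).

(* action of Renv on R: (r (x) r') f = r f r'; equals m((r (x) r')(f (x) 1)) *)
Definition env_act (u : Renv) (f : R) : R := mm (u * tens f 1).

Definition vmul {m q} (h : 'rV[Renv]_m) (H : 'M[R]_(m, q)) : 'rV[R]_q :=
  \row_j \sum_(i < m) env_act (h 0 i) (H i j).

Definition Syz {m q} (H : 'M[R]_(m, q)) (h : 'rV[Renv]_m) : Prop := vmul h H = 0.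

Definition mmv {m} (h : 'rV[Renv]_m) : 'rV[R]_m := map_mx mm h.
Definition tens1 {m} (f : 'rV[R]_m) : 'rV[Renv]_m := map_mx (fun r => tens r 1) f.

Definition bactR {m} (r r' : R) (f : 'rV[R]_m) : 'rV[R]_m := map_mx (fun a => r * a * r') f.
Definition bactE {m} (r r' : R) (h : 'rV[Renv]_m) : 'rV[Renv]_m := map_mx (fun a => tens r r' * a) h.

Definition subbimodule {m} (M : 'rV[R]_m -> Prop) : Prop :=
  [/\ M 0, (forall f g, M f -> M g -> M (f + g)) &
      (forall r r' f, M f -> M (bactR r r' f))].

Definition bigenR {m} (G : seq 'rV[R]_m) (f : 'rV[R]_m) : Prop :=
  exists l : seq ('rV[R]_m * R * R),
    all (fun x => x.1.1 \in G) l /\ f = \sum_(x <- l) bactR x.1.2 x.2 x.1.1.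
Definition bigenE {m} (G : seq 'rV[Renv]_m) (h : 'rV[Renv]_m) : Prop :=
  exists l : seq ('rV[Renv]_m * R * R),
    all (fun x => x.1.1 \in G) l /\ h = \sum_(x <- l) bactE x.1.2 x.2 x.1.1.
Definition lgenE {m} (G : seq 'rV[Renv]_m) (h : 'rV[Renv]_m) : Prop :=
  exists l : seq ('rV[Renv]_m * Renv),
    all (fun x => x.1 \in G) l /\ h = \sum_(x <- l) map_mx (fun a => x.2 * a) x.1.

End Rows.

Section Groebner.
Variable k : fieldType.

Definition pot_lt {E : Type} (lt : E -> E -> Prop) {m} (x y : E * 'I_m) : Prop :=
  (y.2 < x.2)%N \/ (x.2 = y.2 /\ lt x.1 y.1).

Variables (T : zmodType) (E : Type) (coef : T -> E -> k) (lt : E -> E -> Prop)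
  (shift : E -> E -> Prop).

Definition is_exp {m} (f : 'rV[T]_m) (e : E * 'I_m) : Prop :=
  coef (f 0 e.2) e.1 <> 0 /\
  forall e' : E * 'I_m, coef (f 0 e'.2) e'.1 <> 0 -> e' = e \/ pot_lt lt e' e.

Definition Exp_set {m} (L : 'rV[T]_m -> Prop) (e : E * 'I_m) : Prop :=
  exists f, [/\ L f, f <> 0 & is_exp f e].

Definition exp_cond {m} (L : 'rV[T]_m -> Prop) (G : seq 'rV[T]_m) : Prop :=
  forall e, Exp_set L e <->
    exists2 g, g \in G & exists eg, [/\ is_exp g eg, eg.2 = e.2 & shift eg.1 e.1].

Definition GB {m} (gen : seq 'rV[T]_m -> 'rV[T]_m -> Prop)
  (L : 'rV[T]_m -> Prop) (G : seq 'rV[T]_m) : Prop :=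
  [/\ forall g, g \in G -> L g /\ g <> 0,
      forall f, L f <-> gen G f &
      exp_cond L G].
End Groebner.

Definition shiftR {n} (a b : expo n) : Prop := exists c, b = addE a c.
Definition shiftEnv {n} (a b : expo n * expo n) : Prop :=
  exists c d, b.1 = addE a.1 c /\ b.2 = addE a.2 d.

(* coefficient of x^alpha (x) x^{beta^op} in u, i.e. of the PBW monomial with
   exponent (alpha, beta) in Renv *)
Definition coefEnv {k : fieldType} {Renv : Type} {n} (cf2 : Renv -> expo n * expo n -> k)
  (u : Renv) (ab : expo n * expo n) : k := cf2 u (ab.1, revE ab.2).

(* Main.v *)
Require Import Defs.
From HB Require Import structures.
From mathcomp Require Import all_boot all_order all_algebra.
From Stdlib Require Import Classical ClassicalEpsilon.
Import GRing.Theory.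
Set Implicit Arguments. Unset Strict Implicit. Unset Printing Implicit Defensive.
Local Open Scope ring_scope.

Lemma nat_tailmin (g : nat -> nat) k :
  exists j, (k <= j)%N /\ forall j', (k <= j')%N -> (g j <= g j')%N.
Proof.
suff H: forall v j, (k <= j)%N -> (g j <= v)%N ->
    exists j0, (k <= j0)%N /\ forall j', (k <= j')%N -> (g j0 <= g j')%N.
  exact: (H (g k) k (leqnn _) (leqnn _)).
elim=> [|v IH] j kj gj.
  exists j; split=> // j' _; move: gj; rewrite leqn0 => /eqP ->; done.
case: (classic (exists j', (k <= j')%N /\ (g j' < g j)%N)) => [[j' [kj' lt]]|Hn].
  apply: (IH j') => //; rewrite -ltnS; exact: leq_trans lt gj.
exists j; split=> // j' kj'; rewrite leqNgt; apply/negP => lt; apply: Hn; by exists j'.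
Qed.

Lemma nat_subseq (g : nat -> nat) : exists psi : nat -> nat,
  (forall m, (psi m < psi m.+1)%N) /\ forall m, (g (psi m) <= g (psi m.+1))%N.
Proof.
pose am k := constructive_indefinite_description _ (nat_tailmin g k).
pose psi := fix psi m := match m with 0 => sval (am 0%N) | m'.+1 => sval (am (psi m').+1) end.
have P : forall m, forall j', (psi m <= j')%N -> (g (psi m) <= g j')%N.
  case=> [|m] j' h /=.
    by case: (am 0%N) h => /= j [_ Hj] h; apply: Hj.
  by case: (am (psi m).+1) h => /= j [_ Hj] h; apply: Hj; apply: leq_trans h; case: (am _) => /= ? [].
have I : forall m, (psi m < psi m.+1)%N.
  by move=> m /=; case: (am (psi m).+1) => /= j [].
exists psi; split=> // m; apply: P; exact: ltnW.
Qed.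

Section WF.
Variable n : nat.

Lemma dickson (f : nat -> expo n) : exists i j, (i < j)%N /\ forall c, (f i c <= f j c)%N.
Proof.
suff H : forall J : seq 'I_n, exists phi : nat -> nat, (forall m, (phi m < phi m.+1)%N) /\
   forall c, c \in J -> forall m, (f (phi m) c <= f (phi m.+1) c)%N.
  have [phi [H1 H2]] := H (enum 'I_n).
  exists (phi 0%N), (phi 1%N); split; first exact: H1.
  by move=> c; apply: H2; rewrite mem_enum.
elim=> [|c J [phi [H1 H2]]].
  by exists id; split.
have [psi [P1 P2]] := nat_subseq (fun m => f (phi m) c).
have hphi := homo_ltn ltn_trans H1.
exists (fun m => phi (psi m)); split.
  by move=> m; apply: hphi.
move=> c'; rewrite inE => /orP [/eqP -> | cJ] m; first exact: P2.
have := @homo_leq _ (fun m => f (phi m) c') (fun a b => (a <= b)%N) (@leqnn) (fun y x z h1 h2 => leq_trans h1 h2) (H2 c' cJ).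
by apply; apply: ltnW.
Qed.

Variable le : expo n -> expo n -> Prop.
Hypothesis Hle : admissible le.

Lemma addEC (a b : expo n) : addE a b = addE b a.
Proof. by apply/ffunP => i; rewrite !ffunE addnC. Qed.
Lemma add0E (a : expo n) : addE zeroE a = a.
Proof. by apply/ffunP => i; rewrite !ffunE. Qed.

Lemma wf_lt : well_founded (strict le).
Proof.
case: Hle => [Hrefl [Hanti [Htrans [Htot [Hcomp H0]]]]].
move=> a; apply: NNPP => Hna.
have step: forall b : {b | ~ Acc (strict le) b}, {b' : {b | ~ Acc (strict le) b} | strict le (sval b') (sval b)}.
  move=> [b Hb]; apply: constructive_indefinite_description.
  have [b' [H1 H2]] : exists b', strict le b' b /\ ~ Acc (strict le) b'.
    apply: NNPP => Hn; apply: Hb; constructor => b' Hb'; apply: NNPP => Hacc; apply: Hn; by exists b'.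
  by exists (exist _ b' H2).
pose F := fix F m := match m with 0 => exist _ a Hna | m'.+1 => sval (step (F m')) end.
pose f m := sval (F m).
have dec : forall m, strict le (f m.+1) (f m).
  by move=> m; rewrite /f /=; case: (step (F m)).
have strans : forall y x z, strict le x y -> strict le y z -> strict le x z.
  move=> y x z [h1 h2] [h3 h4]; split; first exact: Htrans h3.
  move=> exz; subst z; apply: h2; exact: Hanti.
have hf := @homo_ltn _ f (fun a b => strict le b a) (fun y x z h1 h2 => strans _ _ _ h2 h1) dec.
have [i [j [ij cw]]] := dickson f.
have [h1 h2] : strict le (f j) (f i) := hf i j ij.
apply: h2; apply: Hanti => //.
pose d : expo n := [ffun c => (f j c - f i c)%N].
have := Hcomp _ _ (f i) (H0 d).
rewrite add0E (_ : addE d (f i) = f j) //.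
by apply/ffunP => c; rewrite !ffunE subnK.
Qed.
End WF.


Section Coord.
Variables (k : fieldType) (V : lmodType k) (I : eqType) (e : I -> V) (cf : V -> I -> k).
Hypothesis Hb : Defs.coord_basis e cf.

Lemma big_sub_zero (F : I -> V) (s1 s2 : seq I) : uniq s1 -> uniq s2 -> {subset s1 <= s2} ->
  (forall j, j \notin s1 -> F j = 0) -> \sum_(j <- s2) F j = \sum_(j <- s1) F j.
Proof.
move=> u1 u2 sub F0.
rewrite (bigID (fun j => j \in s1)) /= [X in _ + X]big1 ?addr0; last by move=> j /F0.
rewrite -big_filter; apply: perm_big; apply: uniq_perm; rewrite ?filter_uniq //.
by move=> j; rewrite mem_filter; case jin: (j \in s1) => //=; rewrite sub.
Qed.

Lemma expand_on (w : V) (s : seq I) : uniq s -> (forall j, cf w j <> 0 -> j \in s) ->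
  w = \sum_(j <- s) cf w j *: e j.
Proof.
move=> us Hs; case: Hb => Hexp _.
have [sw [usw Hw Hw0]] := Hexp w.
rewrite {1}Hw -(@big_sub_zero _ sw (undup (sw ++ s))) ?undup_uniq //.
- apply: big_sub_zero; rewrite ?undup_uniq //.
    by move=> j js; rewrite mem_undup mem_cat js orbT.
  move=> j js; case: (eqVneq (cf w j) 0) => [->|/eqP nz]; first by rewrite scale0r.
  by move: (Hs _ nz); rewrite (negbTE js).
- by move=> j js; rewrite mem_undup mem_cat js.
- by move=> j /Hw0 ->; rewrite scale0r.
Qed.

Lemma cf_supp (w : V) : exists s : seq I, uniq s /\ forall j, cf w j <> 0 -> j \in s.
Proof.
case: Hb => Hexp _; have [sw [usw _ Hw0]] := Hexp w.
exists sw; split => // j nz; apply/negPn/negP => /Hw0; exact: nz.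
Qed.

Lemma cf_lin a u v i : cf (a *: u + v) i = a * cf u i + cf v i.
Proof.
case: Hb => Hexp Hcf.
have [su [usu Hsu]] := cf_supp u.
have [sv [usv Hsv]] := cf_supp v.
set s := undup (su ++ sv).
have us : uniq s by rewrite undup_uniq.
have Hu w := @expand_on w s us.
have E : a *: u + v = \sum_(j <- s) (a * cf u j + cf v j) *: e j.
  rewrite {1}(Hu u); last by move=> j /Hsu h; rewrite mem_undup mem_cat h.
  rewrite {1}(Hu v); last by move=> j /Hsv h; rewrite mem_undup mem_cat h orbT.
  rewrite scaler_sumr -big_split /=.
  by apply: eq_bigr => j _; rewrite scalerA scalerDl.
rewrite E Hcf //; case: ifP => // iin.
have -> : cf u i = 0.
  by apply/eqP/negPn/negP => /eqP /Hsu h; move: iin; rewrite mem_undup mem_cat h.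
have -> : cf v i = 0.
  by apply/eqP/negPn/negP => /eqP /Hsv h; move: iin; rewrite mem_undup mem_cat h orbT.
by rewrite mulr0 addr0.
Qed.

Lemma cf0 i : cf 0 i = 0.
Proof.
have := cf_lin 1 0 0 i; rewrite scaler0 addr0 mul1r.
by rewrite -{1}(addr0 (cf 0 i)) => /addrI ->.
Qed.
Lemma cfD u v i : cf (u + v) i = cf u i + cf v i.
Proof. by rewrite -(scale1r u) cf_lin mul1r scale1r. Qed.
Lemma cfZ a u i : cf (a *: u) i = a * cf u i.
Proof. by rewrite -(addr0 (a *: u)) cf_lin cf0 addr0. Qed.
Lemma cfN u i : cf (- u) i = - cf u i.
Proof. by rewrite -scaleN1r cfZ mulN1r. Qed.
Lemma cfB u v i : cf (u - v) i = cf u i - cf v i.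
Proof. by rewrite cfD cfN. Qed.
Lemma cf_sum (J : Type) (r : seq J) (F : J -> V) i :
  cf (\sum_(t <- r) F t) i = \sum_(t <- r) cf (F t) i.
Proof.
elim: r => [|t r IH]; first by rewrite !big_nil cf0.
by rewrite !big_cons cfD IH.
Qed.
Lemma cf_e j i : cf (e j) i = (i == j)%:R.
Proof.
case: Hb => _ Hcf.
have := Hcf [:: j] (fun _ => 1) is_true_true i.
by rewrite big_seq1 scale1r inE; case: eqP.
Qed.
Lemma cf_eq0 v : (forall i, cf v i = 0) -> v = 0.
Proof.
move=> H; have [s [us Hs]] := cf_supp v.
rewrite (expand_on us Hs) big1 // => j _; by rewrite H scale0r.
Qed.

Definition Bnd (P : I -> Prop) (v : V) := forall d, cf v d <> 0 -> P d.

Lemma Bnd_sum (P : I -> Prop) (J : Type) (r : seq J) (c : J -> k) (w : J -> V) :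
  (forall t, c t <> 0 -> Bnd P (w t)) -> Bnd P (\sum_(t <- r) c t *: w t).
Proof.
move=> H d; rewrite cf_sum => nz; apply: NNPP => nP; apply: nz.
apply: big1 => t _; rewrite cfZ.
case: (eqVneq (c t) 0) => [->|/eqP ct]; first by rewrite mul0r.
case: (eqVneq (cf (w t) d) 0) => [->|/eqP cw]; first by rewrite mulr0.
by case: nP; apply: (H t ct).
Qed.

Lemma Bnd_add P u v : Bnd P u -> Bnd P v -> Bnd P (u + v).
Proof.
move=> Hu Hv d; rewrite cfD => nz.
case: (eqVneq (cf u d) 0) => [e0|/eqP]; last exact: Hu.
by apply: Hv; rewrite e0 add0r in nz.
Qed.
Lemma Bnd_scale P a v : Bnd P v -> Bnd P (a *: v).
Proof. by move=> Hv d; rewrite cfZ => nz; apply: Hv => h; apply: nz; rewrite h mulr0. Qed.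
Lemma Bnd_weak (P Q : I -> Prop) v : (forall d, P d -> Q d) -> Bnd P v -> Bnd Q v.
Proof. by move=> PQ Hv d /Hv; apply: PQ. Qed.
Lemma Bnd_e (P : I -> Prop) j : P j -> Bnd P (e j).
Proof. by move=> Pj d; rewrite cf_e; case: eqP => [->|]; rewrite ?eqxx. Qed.
Lemma Bnd0 P : Bnd P 0.
Proof. by move=> d; rewrite cf0. Qed.

Lemma Bnd_map (W : lmodType k) (cfW : W -> I -> k) (Q : I -> Prop) (P : I -> Prop) (f : {linear V -> W}) v :
  (forall (s : seq I) (c : I -> k) (w : I -> W), (forall t, c t <> 0 -> (forall d, cfW (w t) d <> 0 -> Q d)) ->
     forall d, cfW (\sum_(t <- s) c t *: w t) d <> 0 -> Q d) ->
  (forall g, P g -> cf v g <> 0 -> forall d, cfW (f (e g)) d <> 0 -> Q d) ->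
  Bnd P v -> forall d, cfW (f v) d <> 0 -> Q d.
Proof.
move=> Hsum Hg Hv; have [s [us Hs]] := cf_supp v.
rewrite (expand_on us Hs) linear_sum /=.
rewrite (eq_bigr (fun t => cf v t *: f (e t))); last by move=> t _; rewrite linearZ.
apply: Hsum => t ct; apply: Hg => //; exact: Hv.
Qed.
End Coord.


Lemma prod_ord_first (R : ringType) n (F : 'I_n -> R) (j : 'I_n) :
  (forall l : 'I_n, (l < j)%N -> F l = 1) ->
  \prod_(i < n) F i = F j * \prod_(i < n | (j < i)%N) F i.
Proof.
move=> H1.
pose G (t : nat) := oapp F 1 (insub t).
have FG : forall i : 'I_n, F i = G i by move=> i; rewrite /G valK.
rewrite (eq_bigr (fun i : 'I_n => G i)) // -(big_mkord xpredT G).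
rewrite (eq_bigr (fun i : 'I_n => G i)) // -(big_mkord (fun t => (j < t)%N) G).
have jn : (j < n)%N := ltn_ord j.
rewrite (big_cat_nat (leq0n j)) ?(ltnW jn) //=.
rewrite [X in X * _]big1_seq ?mul1r; last first.
  move=> t /andP [_]; rewrite mem_index_iota => /andP [_ tj].
  rewrite /G; case: insubP => //= o _ ot; apply: H1; by rewrite ot.
rewrite big_ltn // FG; congr (_ * _).
rewrite [RHS](big_cat_nat (leq0n j.+1)) //= [X in _ = X * _]big1_seq ?mul1r; last first.
  move=> t /andP [jt]; rewrite mem_index_iota => /andP [_ tj].
  by move: (leq_trans jt tj); rewrite ltnn.
rewrite [RHS]big_nat_cond [LHS]big_nat_cond; apply: eq_bigl => t.
case: (_ <= t < n)%N / andP => //= [[jt _]].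
by rewrite jt.
Qed.

Section PBW.
Variables (k : fieldType) (R : algType k) (n : nat) (x : 'I_n -> R)
  (qc : 'I_n -> 'I_n -> k) (pc : 'I_n -> 'I_n -> R)
  (le : expo n -> expo n -> Prop) (cf : R -> expo n -> k).
Hypothesis HR : is_PBW x qc pc le cf.

Local Notation lt := (strict le).
Local Notation mono := (Defs.mono x).

Lemma Hadm : admissible le. Proof. by case: HR. Qed.
Lemma Hb : Defs.coord_basis mono cf. Proof. by case: HR. Qed.

Lemma leR a : le a a. Proof. by case: Hadm. Qed.
Lemma le_anti a b : le a b -> le b a -> a = b. Proof. by case: Hadm => _ [h _]; apply: h. Qed.
Lemma le_trans a b c : le a b -> le b c -> le a c. Proof. by case: Hadm => _ [_ [h _]]; apply: h. Qed.
Lemma le_tot a b : le a b \/ le b a. Proof. by case: Hadm => _ [_ [_ [h _]]]; apply: h. Qed.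
Lemma le_addr a b c : le a b -> le (addE a c) (addE b c). Proof. by case: Hadm => _ [_ [_ [_ [h _]]]]; apply: h. Qed.
Lemma le0 a : le zeroE a. Proof. by case: Hadm => _ [_ [_ [_ [_ h]]]]; apply: h. Qed.

Lemma addEA (a b c : expo n) : addE a (addE b c) = addE (addE a b) c.
Proof. by apply/ffunP => i; rewrite !ffunE addnA. Qed.
Lemma addE0 (a : expo n) : addE a zeroE = a.
Proof. by apply/ffunP => i; rewrite !ffunE addn0. Qed.
Lemma addEI (a b c : expo n) : addE c a = addE c b -> a = b.
Proof. move=> h; apply/ffunP => i; move/ffunP: h => /(_ i); rewrite !ffunE; exact: addnI. Qed.
Lemma addIE (a b c : expo n) : addE a c = addE b c -> a = b.
Proof. by rewrite ![addE _ c]addEC; apply: addEI. Qed.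

Lemma le_addl a b c : le a b -> le (addE c a) (addE c b).
Proof. by rewrite ![addE c _]addEC; apply: le_addr. Qed.
Lemma le_add a b c d : le a b -> le c d -> le (addE a c) (addE b d).
Proof. by move=> h1 h2; apply: (le_trans (le_addr c h1)); apply: le_addl. Qed.
Lemma le_self_add a c : le a (addE c a).
Proof. by have := le_addr a (le0 c); rewrite add0E. Qed.
Lemma ltW a b : lt a b -> le a b. Proof. by case. Qed.
Lemma lt_le_trans a b c : lt a b -> le b c -> lt a c.
Proof. move=> [h1 h2] h3; split; first exact: le_trans h3. by move=> e; subst; apply: h2; apply: le_anti. Qed.
Lemma le_lt_trans a b c : le a b -> lt b c -> lt a c.
Proof. move=> h1 [h2 h3]; split; first exact: le_trans h2. by move=> e; subst; apply: h3; apply: le_anti. Qed.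
Lemma lt_addr a b c : lt a b -> lt (addE a c) (addE b c).
Proof. by move=> [h1 h2]; split; [exact: le_addr | move/addIE]. Qed.
Lemma lt_addl a b c : lt a b -> lt (addE c a) (addE c b).
Proof. by move=> [h1 h2]; split; [exact: le_addl | move/addEI]. Qed.
Lemma lt_irr a : ~ lt a a. Proof. by case. Qed.
Lemma not_lt0 a : ~ lt a zeroE.
Proof. by move=> [h1 h2]; apply: h2; apply: le_anti => //; apply: le0. Qed.
Lemma lt_eps j a : lt a (addE (epsE j) a).
Proof.
split; first exact: le_self_add.
move/ffunP => /(_ j); rewrite !ffunE eqxx => /eqP; rewrite -{1}(add0n (a j)) eqn_add2r.
by [].
Qed.

Definition Bd v e := Bnd cf (fun d => le d e) v.
Definition Bs v e := Bnd cf (fun d => lt d e) v.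
Definition LT v e := cf v e <> 0 /\ Bd v e.

Lemma cf_mono a d : cf (mono a) d = (d == a)%:R.
Proof. exact: (cf_e Hb). Qed.

Lemma LT_mono e : LT (mono e) e.
Proof.
split; first by rewrite cf_mono eqxx /=; apply/eqP; exact: oner_neq0.
by apply: Bnd_e; [exact: Hb | exact: leR].
Qed.

Lemma LT_decomp v e : LT v e -> exists w, v = cf v e *: mono e + w /\ Bs w e.
Proof.
move=> [nz Hv]; exists (v - cf v e *: mono e); split; first by rewrite addrC subrK.
move=> d; rewrite (cfB Hb) (cfZ Hb) cf_mono.
case: (eqVneq d e) => [->|de]; first by rewrite mulr1 subrr.
rewrite mulr0 subr0 => /Hv h; split => //; exact/eqP.
Qed.

Lemma LT_add v w e : LT v e -> Bs w e -> LT (v + w) e.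
Proof.
move=> [nz Hv] Hw; split.
  rewrite (cfD Hb); case: (eqVneq (cf w e) 0) => [->|/eqP /Hw]; first by rewrite addr0.
  by move/lt_irr.
apply: Bnd_add => //; first exact: Hb.
apply: Bnd_weak Hw => d; exact: ltW.
Qed.

Lemma LT_scale c v e : c != 0 -> LT v e -> LT (c *: v) e.
Proof.
move=> cn [nz Hv]; split; last exact: (Bnd_scale Hb).
by rewrite (cfZ Hb) => /eqP; rewrite mulf_eq0 (negbTE cn) /= => /eqP.
Qed.

Lemma Bd_of_LT v e : LT v e -> Bd v e. Proof. by case. Qed.

Lemma Bnd_mull (r : R) (P Q : expo n -> Prop) v :
  (forall g, P g -> Bnd cf Q (r * mono g)) -> Bnd cf P v -> Bnd cf Q (r * v).
Proof.
move=> H Hv; have [s [us Hs]] := cf_supp Hb v.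
rewrite (expand_on Hb us Hs) mulr_sumr.
rewrite (eq_bigr (fun t => cf v t *: (r * mono t))); last by move=> t _; rewrite scalerAr.
apply: (Bnd_sum Hb) => t ct; apply: H; exact: Hv.
Qed.

Lemma Bnd_mulr (r : R) (P Q : expo n -> Prop) v :
  (forall g, P g -> Bnd cf Q (mono g * r)) -> Bnd cf P v -> Bnd cf Q (v * r).
Proof.
move=> H Hv; have [s [us Hs]] := cf_supp Hb v.
rewrite (expand_on Hb us Hs) mulr_suml.
rewrite (eq_bigr (fun t => cf v t *: (mono t * r))); last by move=> t _; rewrite scalerAl.
apply: (Bnd_sum Hb) => t ct; apply: H; exact: Hv.
Qed.

Lemma mono0 : mono zeroE = 1.
Proof. by rewrite /Defs.mono big1 // => i _; rewrite ffunE expr0. Qed.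

Lemma M3 (j : 'I_n) (a : expo n) : (forall l : 'I_n, (l < j)%N -> a l = 0%N) ->
  x j * mono a = mono (addE (epsE j) a).
Proof.
move=> H0; rewrite /Defs.mono.
rewrite (@prod_ord_first _ _ (fun i => x i ^+ a i) j); last by move=> l /H0 ->; rewrite expr0.
rewrite (@prod_ord_first _ _ (fun i => x i ^+ addE (epsE j) a i) j); last first.
  move=> l lj; rewrite !ffunE H0 // addn0.
  by case: eqP => [e|]; [move: lj; rewrite e ltnn | rewrite expr0].
rewrite mulrA -exprS !ffunE eqxx add1n; congr (_ * _).
apply: eq_bigr => i ji; rewrite !ffunE.
by case: eqP => [e|//]; move: ji; rewrite e ltnn.
Qed.

Lemma first_nz (a : expo n) : a = zeroE \/
  exists j, (0 < a j)%N /\ forall l : 'I_n, (l < j)%N -> a l = 0%N.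
Proof.
case: (pickP (fun j => (0 < a j)%N)) => [j0 Hj0 | H]; last first.
  left; apply/ffunP => i; rewrite !ffunE; move: (H i) => /= /negbT; by rewrite lt0n negbK => /eqP.
right; case: (@arg_minnP _ j0 (fun j => (0 < a j)%N) (fun j : 'I_n => val j) Hj0) => j Hj Hmin.
exists j; split => // l lj; apply/eqP; rewrite -leqn0 leqNgt; apply/negP => al.
by have := Hmin l al; rewrite leqNgt lj.
Qed.

Definition decE (a : expo n) j : expo n := [ffun l => if l == j then (a l).-1 else a l].
Lemma decE_spec (a : expo n) (j : 'I_n) : (0 < a j)%N -> a = addE (epsE j) (decE a j).
Proof.
move=> h; apply/ffunP => l; rewrite !ffunE; case: eqP => [->|]; last by rewrite add0n.
by rewrite add1n prednK.
Qed.
Lemma decE_ne (a : expo n) (j l : 'I_n) : l != j -> decE a j l = a l.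
Proof. by rewrite ffunE => /negbTE ->. Qed.

Definition degE (a : expo n) := (\sum_(i < n) a i)%N.
Lemma deg_add a b : degE (addE a b) = (degE a + degE b)%N.
Proof. by rewrite /degE -big_split; apply: eq_bigr => i _; rewrite ffunE. Qed.
Lemma deg_eps (j : 'I_n) : degE (epsE j) = 1%N.
Proof.
rewrite /degE (bigD1 j) //= ffunE eqxx big1 // => i ij; by rewrite ffunE (negbTE ij).
Qed.

Lemma decomp (d : expo n) : d = zeroE \/ exists j d', [/\ d = addE (epsE j) d',
  mono d = x j * mono d' & (degE d' < degE d)%N].
Proof.
case: (first_nz d) => [->|[j [dj H0]]]; first by left.
right; exists j, (decE d j); have E := decE_spec dj.
split => //; last by rewrite {2}E deg_add deg_eps.
rewrite {1}E M3 // => l lj; rewrite decE_ne ?H0 //.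
by apply/eqP => e; move: lj; rewrite e ltnn.
Qed.

Lemma V_all : forall e (i : 'I_n) (a : expo n), addE (epsE i) a = e -> LT (x i * mono a) e.
Proof.
move=> e; elim/(well_founded_induction (wf_lt Hadm)): e => e IH i a Ea.
have IHX : forall (j : 'I_n) v f, Bd v f -> lt (addE (epsE j) f) e -> Bd (x j * v) (addE (epsE j) f).
  move=> j v f Hv lf; apply: (Bnd_mull _ Hv) => g gf.
  have lg : lt (addE (epsE j) g) e := le_lt_trans (le_addl _ gf) lf.
  apply: Bnd_weak (Bd_of_LT (IH _ lg j g erefl)) => d dle; exact: le_trans dle (le_addl _ gf).
have IHmul : forall m d v f, (degE d <= m)%N -> Bd v f -> lt (addE d f) e ->
    Bd (mono d * v) (addE d f).
  elim=> [|m IHm] d v f dm Hv lf.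
    case: (decomp d) => [->|[j [d' [Ed Md dd]]]]; first by rewrite mono0 mul1r add0E.
    by move: (leq_trans dd dm).
  case: (decomp d) => [->|[j [d' [Ed Md dd]]]]; first by rewrite mono0 mul1r add0E.
  rewrite Md -mulrA Ed -addEA; apply: IHX; last by rewrite addEA -Ed.
  apply: IHm => //; first by rewrite -ltnS; exact: leq_trans dd dm.
  apply: le_lt_trans lf; rewrite Ed -addEA; exact: le_self_add.
have caseA : (forall l : 'I_n, (l < i)%N -> a l = 0%N) -> LT (x i * mono a) e.
  by move=> H; rewrite M3 // Ea; exact: LT_mono.
case: (first_nz a) => [a0|[j [aj H0]]].
  by apply: caseA => l _; rewrite a0 ffunE.
case: (leqP i j) => [ij|ji].
  by apply: caseA => l li; apply: H0; exact: leq_trans li ij.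
set a' := decE a j.
have Ea' : a = addE (epsE j) a' := decE_spec aj.
have H0' : forall l : 'I_n, (l < j)%N -> a' l = 0%N.
  move=> l lj; rewrite /a' decE_ne ?H0 //; by apply/eqP => el; move: lj; rewrite el ltnn.
have Ma : mono a = x j * mono a' by rewrite M3 // -Ea'.
have [_ _ Hrel] := HR.
have [qn Hr Hp] := Hrel j i ji.
have Eq : x i * mono a = qc i j *: (x j * (x i * mono a')) + pc i j * mono a'.
  by rewrite Ma mulrA Hr mulrDl -scalerAl -mulrA.
set e1 := addE (epsE i) a'.
have He : e = addE (epsE j) e1.
  rewrite -Ea Ea' /e1; apply/ffunP => l; rewrite !ffunE.
  by rewrite addnCA.
have He2 : e = addE (addE (epsE j) (epsE i)) a'.
  by rewrite He /e1 addEA.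
have le1 : lt e1 e by rewrite He; exact: lt_eps.
have [w [Ew Bw]] := LT_decomp (IH _ le1 i a' erefl).
have nzc : cf (x i * mono a') e1 != 0 by apply/eqP; case: (IH _ le1 i a' erefl).
have Me1 : x j * mono e1 = mono e.
  rewrite M3 -?He // => l lj; rewrite /e1 ffunE H0' // addn0 ffunE.
  by case: eqP => // el; move: (ltn_trans lj ji); rewrite el ltnn.
have L1 : LT (x j * (x i * mono a')) e.
  rewrite Ew mulrDr -scalerAr Me1; apply: LT_add; first exact: LT_scale (LT_mono e).
  apply: (Bnd_mull _ Bw) => g ge1.
  have lg : lt (addE (epsE j) g) e by rewrite He; exact: lt_addl.
  apply: Bnd_weak (Bd_of_LT (IH _ lg j g erefl)) => d dle; exact: le_lt_trans dle lg.
rewrite Eq; apply: LT_add; first exact: LT_scale L1.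
have Bp : Bnd cf (fun g => lt g (addE (epsE j) (epsE i))) (pc i j).
  by move=> g /eqP /Hp.
apply: (Bnd_mulr _ Bp) => g gl.
have lg : lt (addE g a') e by rewrite He2; exact: lt_addr.
apply: Bnd_weak (IHmul _ g _ _ (leqnn _) (Bd_of_LT (LT_mono a')) lg) => d dle.
exact: le_lt_trans dle lg.
Qed.

Lemma LTX (j : 'I_n) v e : LT v e -> LT (x j * v) (addE (epsE j) e).
Proof.
move=> Hv; have [w [Ew Bw]] := LT_decomp Hv.
have nzc : cf v e != 0 by apply/eqP; case: Hv.
rewrite Ew mulrDr -scalerAr; apply: LT_add; first exact: LT_scale (V_all erefl).
apply: (Bnd_mull _ Bw) => g ge.
have lg : lt (addE (epsE j) g) (addE (epsE j) e) by exact: lt_addl.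
apply: Bnd_weak (Bd_of_LT (V_all (i:=j) (a:=g) erefl)) => d dle; exact: le_lt_trans dle lg.
Qed.

Lemma LTmono d v e : LT v e -> LT (mono d * v) (addE d e).
Proof.
move=> Hv; move: {2}(degE d) (leqnn (degE d)) => m; elim: m d => [|m IHm] d dm.
  case: (decomp d) => [->|[j [d' [Ed Md dd]]]]; first by rewrite mono0 mul1r add0E.
  by move: (leq_trans dd dm).
case: (decomp d) => [->|[j [d' [Ed Md dd]]]]; first by rewrite mono0 mul1r add0E.
rewrite Md -mulrA Ed -addEA; apply: LTX; apply: IHm.
by rewrite -ltnS; exact: leq_trans dd dm.
Qed.

End PBW.


Lemma revEK n (a : expo n) : revE (revE a) = a.
Proof. by apply/ffunP => i; rewrite !ffunE rev_ordK. Qed.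
Lemma revE0 n : revE (zeroE : expo n) = zeroE.
Proof. by apply/ffunP => i; rewrite !ffunE. Qed.
Lemma revED n (a b : expo n) : revE (addE a b) = addE (revE a) (revE b).
Proof. by apply/ffunP => i; rewrite !ffunE. Qed.
Lemma revE_eq0 n (a : expo n) : revE a = zeroE -> a = zeroE.
Proof. by move=> h; rewrite -(revEK a) h revE0. Qed.
Lemma addE_eq0 n (a b : expo n) : zeroE = addE a b -> a = zeroE.
Proof.
move=> h; apply/ffunP => i; move/ffunP: h => /(_ i); rewrite !ffunE => /esym/eqP.
by rewrite addn_eq0 => /andP [/eqP -> _].
Qed.

Section Exp.
Variables (k : fieldType) (T : zmodType) (E : Type) (coef : T -> E -> k) (lt : E -> E -> Prop).

Lemma is_expP m (f : 'rV[T]_m) e : is_exp coef lt f e ->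
  coef (f 0 e.2) e.1 <> 0 /\ forall (j : 'I_m) d, coef (f 0 j) d <> 0 ->
     (e.2 < j)%N \/ (j = e.2 /\ (d = e.1 \/ lt d e.1)).
Proof.
move=> [nz H]; split => // j d nzd; case: (H (d, j) nzd) => [<-|[h|[/= h1 h2]]].
- by right; split => //; left.
- by left.
- by right; split => //; right.
Qed.

Lemma is_expI m (f : 'rV[T]_m) e : coef (f 0 e.2) e.1 <> 0 ->
  (forall (j : 'I_m) d, coef (f 0 j) d <> 0 -> (e.2 < j)%N \/ (j = e.2 /\ (d = e.1 \/ lt d e.1))) ->
  is_exp coef lt f e.
Proof.
move=> nz H; split => // [[d j]] /H [h|[/= -> [->|h]]].
- by right; left.
- by left; case: e nz H.
- by right; right.
Qed.
End Exp.


Section Env.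
Variables (k : fieldType) (n : nat) (R : algType k) (x : 'I_n -> R) (qc : 'I_n -> 'I_n -> k)
  (pc : 'I_n -> 'I_n -> R) (le : expo n -> expo n -> Prop) (cf : R -> expo n -> k).
Hypothesis HR : is_PBW x qc pc le cf.
Variables (Renv : algType k) (tens : R -> R -> Renv) (cf2 : Renv -> expo n * expo n -> k).
Hypothesis Henv : is_env x tens cf2.
Variables (mm : {linear Renv -> R}).
Hypothesis Hmm : is_mult tens mm.

Local Notation mono := (Defs.mono x).
Local Notation lt := (strict le).

Lemma tensDl a b c : tens (a + b) c = tens a c + tens b c. Proof. by case: Henv. Qed.
Lemma tensDr a b c : tens a (b + c) = tens a b + tens a c. Proof. by case: Henv => _ []. Qed.
Lemma tensZl (z : k) a b : tens (z *: a) b = z *: tens a b. Proof. by case: Henv => _ [_ []]. Qed.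
Lemma tensZr (z : k) a b : tens a (z *: b) = z *: tens a b. Proof. by case: Henv => _ [_ [_ []]]. Qed.
Lemma tensM a b c d : tens a b * tens c d = tens (a * c) (d * b). Proof. by case: Henv => _ [_ [_ [_ []]]]. Qed.
Lemma tens11 : tens 1 1 = 1. Proof. by case: Henv => _ [_ [_ [_ [_ []]]]]. Qed.
Lemma Hb2 : Defs.coord_basis (fun ab : expo n * expo n => tens (mono ab.1) (mono ab.2)) cf2.
Proof. by case: Henv => _ [_ [_ [_ [_ [_ h]]]]]. Qed.

Lemma tens0l c : tens 0 c = 0.
Proof. by have := tensDl 0 0 c; rewrite addr0 -{1}(addr0 (tens 0 c)) => /addrI ->. Qed.
Lemma tens0r c : tens c 0 = 0.
Proof. by have := tensDr c 0 0; rewrite addr0 -{1}(addr0 (tens c 0)) => /addrI ->. Qed.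

Lemma tens_suml (J : Type) (r : seq J) (c : J -> k) (F : J -> R) b :
  tens (\sum_(t <- r) c t *: F t) b = \sum_(t <- r) c t *: tens (F t) b.
Proof.
elim: r => [|t r IH]; first by rewrite !big_nil tens0l.
by rewrite !big_cons tensDl tensZl IH.
Qed.
Lemma tens_sumr (J : Type) (r : seq J) (c : J -> k) (F : J -> R) b :
  tens b (\sum_(t <- r) c t *: F t) = \sum_(t <- r) c t *: tens b (F t).
Proof.
elim: r => [|t r IH]; first by rewrite !big_nil tens0r.
by rewrite !big_cons tensDr tensZr IH.
Qed.

Lemma HbR : Defs.coord_basis mono cf. Proof. by case: HR. Qed.

Lemma cf2_tens_l r a b : cf2 (tens r 1) (a, b) = (b == zeroE)%:R * cf r a.
Proof.
have [sr [usr Hsr]] := cf_supp HbR r.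
rewrite {1}(expand_on HbR usr Hsr) -(mono0 x) tens_suml.
rewrite -(big_map (fun t => (t, zeroE)) xpredT (fun u => cf r u.1 *: tens (mono u.1) (mono u.2))).
case: Hb2 => _ Hcf; rewrite Hcf; last first.
  by rewrite map_inj_uniq // => u v [].
case: (eqVneq b zeroE) => [->|bn].
  rewrite mul1r; case: ifP => //; move/negbT => nin.
  apply/esym/eqP/negPn/negP => /eqP /Hsr ain; case/negP: nin.
  by apply/mapP; exists a.
rewrite mul0r; case: ifP => // /mapP [t _ [_ e]]; by rewrite e eqxx in bn.
Qed.

Lemma cf2_tens_r r a b : cf2 (tens 1 r) (a, b) = (a == zeroE)%:R * cf r b.
Proof.
have [sr [usr Hsr]] := cf_supp HbR r.
rewrite {1}(expand_on HbR usr Hsr) -(mono0 x) tens_sumr.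
rewrite -(big_map (fun t => (zeroE, t)) xpredT (fun u => cf r u.2 *: tens (mono u.1) (mono u.2))).
case: Hb2 => _ Hcf; rewrite Hcf; last first.
  by rewrite map_inj_uniq // => u v [].
case: (eqVneq a zeroE) => [->|an].
  rewrite mul1r; case: ifP => //; move/negbT => nin.
  apply/esym/eqP/negPn/negP => /eqP /Hsr ain; case/negP: nin.
  by apply/mapP; exists b.
rewrite mul0r; case: ifP => // /mapP [t _ [e _]]; by rewrite e eqxx in an.
Qed.

Lemma mm_tens_mul r r' a : mm (tens r r' * a) = r * mm a * r'.
Proof.
have [s [us Hs]] := cf_supp Hb2 a.
rewrite (expand_on Hb2 us Hs) mulr_sumr !linear_sum mulr_sumr mulr_suml.
apply: eq_bigr => t _; rewrite -scalerAr tensM !linearZ /= !Hmm.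
by rewrite -scalerAr -scalerAl !mulrA.
Qed.

Lemma mm_tens1 a : mm (tens a 1) = a. Proof. by rewrite Hmm mulr1. Qed.
Lemma mm_tens1' a : mm (tens 1 a) = a. Proof. by rewrite Hmm mul1r. Qed.

Lemma LT_mm u a0 b0 : cf2 u (a0, b0) <> 0 ->
  (forall ab, ab <> (a0, b0) -> cf2 u ab <> 0 -> lt (addE ab.1 ab.2) (addE a0 b0)) ->
  LT le cf (mm u) (addE a0 b0).
Proof.
move=> nz Hot.
have [s [us Hs]] := cf_supp Hb2 u.
have E : mm u = \sum_(t <- s) cf2 u t *: (mono t.1 * mono t.2).
  rewrite {1}(expand_on Hb2 us Hs) linear_sum; apply: eq_bigr => t _.
  by rewrite linearZ /= Hmm.
have Lt : forall t, LT le cf (mono t.1 * mono t.2) (addE t.1 t.2).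
  by move=> t; apply: (LTmono HR); apply: (LT_mono HR).
split.
  rewrite E (cf_sum HbR) (bigD1_seq (a0, b0)) //=; last exact: Hs.
  rewrite big1_seq ?addr0; last first.
    move=> t /andP [tn _]; rewrite (cfZ HbR).
    case: (eqVneq (cf2 u t) 0) => [->|/eqP ct]; first by rewrite mul0r.
    have tn' : t <> (a0, b0) by move=> e; move: tn; rewrite e eqxx.
    have lt0 := Hot t tn' ct.
    case: (eqVneq (cf (mono t.1 * mono t.2) (addE a0 b0)) 0) => [->|/eqP cm]; first by rewrite mulr0.
    have := (Lt t).2 _ cm => hle; case: (lt_irr (le_lt_trans HR hle lt0)).
  rewrite (cfZ HbR) => /eqP; rewrite mulf_eq0 => /orP [/eqP //|/eqP].
  exact: (Lt (a0, b0)).1.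
rewrite E; apply: (Bnd_sum HbR) => t ct.
case: (eqVneq t (a0, b0)) => [->|tn]; first exact: (Lt (a0, b0)).2.
have tn' : t <> (a0, b0) by move=> e; move: tn; rewrite e eqxx.
apply: Bnd_weak (Lt t).2 => d dle; apply: ltW.
have h1 := Hot t tn' ct. have h2 := le_lt_trans HR dle h1. exact: h2.
Qed.

End Env.


Section Main.
Variables (k : fieldType) (n : nat) (R : algType k) (x : 'I_n -> R) (qc : 'I_n -> 'I_n -> k)
  (pc : 'I_n -> 'I_n -> R) (le : expo n -> expo n -> Prop) (cf : R -> expo n -> k).
Hypothesis HR : is_PBW x qc pc le cf.
Variables (Renv : algType k) (tens : R -> R -> Renv) (cf2 : Renv -> expo n * expo n -> k).
Hypothesis Henv : is_env x tens cf2.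
Variables (mm : {linear Renv -> R}).
Hypothesis Hmm : is_mult tens mm.
Variables (s : nat) (M : 'rV[R]_s -> Prop).
Hypothesis HM : subbimodule M.
Variables (p q : nat) (H : 'M[R]_(s + p, q)).
Hypothesis Hi : forall h : 'rV[Renv]_s,
      vmul tens mm (tens1 tens (mmv mm h)) (usubmx H) = vmul tens mm h (usubmx H).
Hypothesis Hii : forall f : 'rV[R]_s,
      M f <-> exists h2 : 'rV[Renv]_p, Syz tens mm H (row_mx (tens1 tens f) h2).
Variable hs : seq 'rV[Renv]_(s + p).

Local Notation mono := (Defs.mono x).
Local Notation lt := (strict le).
Local Notation Gs := [seq mmv mm (lsubmx h) | h <- hs].

Lemma vmul_row_mx m1 m2 (A : 'rV[Renv]_m1) (B : 'rV[Renv]_m2) (K : 'M[R]_(m1 + m2, q)) :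
  vmul tens mm (row_mx A B) K = vmul tens mm A (usubmx K) + vmul tens mm B (dsubmx K).
Proof.
apply/rowP => j; rewrite !mxE big_split_ord; congr (_ + _); apply: eq_bigr => i _.
  by rewrite row_mxEl mxE.
by rewrite row_mxEr mxE.
Qed.

Lemma M_bigen (G : seq 'rV[R]_s) : (forall g, g \in G -> M g) -> forall f, bigenR G f -> M f.
Proof.
move=> HG f [l [Hall ->]]; case: HM => M0 MD MA.
elim: l Hall => [|y l IH]; first by rewrite big_nil.
by rewrite /= big_cons => /andP [yG Hl]; apply: MD; [apply: MA; apply: HG | apply: IH].
Qed.

Section Part1.
Hypothesis HS : forall h, Syz tens mm H h <-> bigenE tens hs h.

Lemma genM h : h \in hs -> M (mmv mm (lsubmx h)).
Proof.
move=> hin; have Sh : Syz tens mm H h.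
  apply/HS; exists [:: (h, 1, 1)]; split; first by rewrite /= hin.
  rewrite big_seq1 /= /bactE (tens11 Henv); apply/matrixP => i j; by rewrite mxE mul1r.
apply/Hii; exists (rsubmx h); move: Sh; rewrite /Syz !vmul_row_mx Hi.
by rewrite -vmul_row_mx hsubmxK.
Qed.

Lemma GsM g : g \in Gs -> M g.
Proof. by case/mapP => h hin ->; apply: genM. Qed.

Lemma part1 f : M f <-> bigenR Gs f.
Proof.
split; first last. by move=> hb; apply: (M_bigen GsM hb).
move/Hii => [h2 /HS [l [Hall Heq]]].
exists [seq (mmv mm (lsubmx y.1.1), y.1.2, y.2) | y <- l]; split.
  rewrite all_map; apply/allP => y yl /=; apply: map_f; exact: (allP Hall y yl).
rewrite big_map; apply/rowP => j.
have := congr1 (fun A : 'rV[Renv]_(s + p) => mm (A 0 (lshift p j))) Heq.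
rewrite /= row_mxEl mxE (mm_tens1 Hmm) => ->.
rewrite !summxE linear_sum; apply: eq_bigr => y _.
by rewrite !mxE (mm_tens_mul Henv Hmm).
Qed.
End Part1.

Lemma filter_gen f : bigenR Gs f <-> bigenR [seq g <- Gs | g != 0] f.
Proof.
split; move=> [l [Hall ->]].
  exists [seq y <- l | y.1.1 != 0]; split.
    rewrite all_filter; apply/allP => y yl; apply/implyP => yn.
    by rewrite mem_filter yn (allP Hall y yl).
  rewrite big_filter [LHS](bigID (fun y => y.1.1 != 0)) /= [X in _ + X]big1 ?addr0 //.
  move=> y /negPn /eqP ->; apply/matrixP => i j; by rewrite !mxE mulr0 mul0r.
exists l; split => //; apply/allP => y yl; have := allP Hall y yl.
by rewrite mem_filter => /andP [].
Qed.

Lemma exp_vec_R m (f : 'rV[R]_m) (i : 'I_m) e1 :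
  (forall j : 'I_m, (j < i)%N -> f 0 j = 0) -> LT le cf (f 0 i) e1 ->
  is_exp cf lt f (e1, i).
Proof.
move=> Hz [nz Hb]; apply: is_expI => // j d nzd /=.
case: (ltngtP j i) => [ji|ij|ji].
- by move: nzd; rewrite Hz // (cf0 (HbR HR)).
- by left.
- have ej : j = i by apply: ord_inj.
  subst j; right; split => //; have := Hb _ nzd.
  by case: (classic (d = e1)) => [->|dn] dle; [left|right].
Qed.

Lemma exp_vec_R_inv m (f : 'rV[R]_m) (i : 'I_m) e1 : is_exp cf lt f (e1, i) ->
  (forall j : 'I_m, (j < i)%N -> f 0 j = 0) /\ LT le cf (f 0 i) e1.
Proof.
move/is_expP => [nz Hf]; split.
  move=> j ji; apply: (cf_eq0 (HbR HR)) => d; apply: NNPP => /Hf /= [ij|[ej _]].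
    by move: (ltn_trans ij ji); rewrite ltnn.
  by move: ji; rewrite ej ltnn.
split => // d /Hf /= [|[_ [->|/ltW //]]]; first by rewrite ltnn.
exact: (@leR _ _ _ _ _ _ _ _ HR e1).
Qed.

Lemma exp_env_inv (ltE : expo n * expo n -> expo n * expo n -> Prop) g (i : 'I_s) e1 :
  is_exp (coefEnv cf2) ltE g (e1, lshift p i) ->
  (forall j : 'I_s, (j < i)%N -> g 0 (lshift p j) = 0) /\
  cf2 (g 0 (lshift p i)) (e1.1, revE e1.2) <> 0 /\
  (forall ab, cf2 (g 0 (lshift p i)) ab <> 0 -> (ab.1, revE ab.2) = e1 \/ ltE (ab.1, revE ab.2) e1).
Proof.
move/is_expP => [nz Hf]; split; last split.
- move=> j ji; apply: (cf_eq0 (Hb2 Henv)) => ab; apply: NNPP => nab.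
  have : coefEnv cf2 (g 0 (lshift p j)) (ab.1, revE ab.2) <> 0 by rewrite /coefEnv revEK; case: ab nab.
  move/Hf => /= [ij|[ej _]].
    by move: (ltn_trans ij ji); rewrite ltnn.
  by move: ji; rewrite -[X in (X < _)%N]/(val (lshift p j)) ej ltnn.
- by move: nz; rewrite /coefEnv.
- move=> ab nab.
  have : coefEnv cf2 (g 0 (lshift p i)) (ab.1, revE ab.2) <> 0 by rewrite /coefEnv revEK; case: ab nab.
  by move/Hf => /= [|[_ h]]; [rewrite ltnn | ].
Qed.

Section Part2.
Hypothesis HS : forall h, Syz tens mm H h <-> bigenE tens hs h.

Lemma from_g g (i : 'I_s) a0 b0 : g \in hs ->
  (forall j : 'I_s, (j < i)%N -> g 0 (lshift p j) = 0) ->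
  cf2 (g 0 (lshift p i)) (a0, b0) <> 0 ->
  (forall ab, ab <> (a0, b0) -> cf2 (g 0 (lshift p i)) ab <> 0 -> lt (addE ab.1 ab.2) (addE a0 b0)) ->
  exists2 g', g' \in [seq g <- Gs | g != 0] & is_exp cf lt g' (addE a0 b0, i).
Proof.
move=> gin Hz nz Hot.
have Hexp : is_exp cf lt (mmv mm (lsubmx g)) (addE a0 b0, i).
  apply: exp_vec_R.
    by move=> j ji; rewrite !mxE Hz // linear0.
  rewrite !mxE; have hh := LT_mm HR Henv Hmm nz Hot; exact: hh.
exists (mmv mm (lsubmx g)) => //.
rewrite mem_filter (map_f _ gin) andbT; apply/eqP => e0.
by case: Hexp; rewrite e0 mxE (cf0 (HbR HR)).
Qed.

Lemma exp_back e : (exists2 g, g \in [seq g <- Gs | g != 0] &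
     exists eg, [/\ is_exp cf lt g eg, eg.2 = e.2 & shiftR eg.1 e.1]) ->
  Exp_set cf lt M e.
Proof.
move=> [g gin [[a1 i1] [Hg /= eg2 [c Ec]]]]; case: e eg2 Ec => α i /= eg2 Ec; subst i1.
have Mg : M g by apply: (GsM HS); move: gin; rewrite mem_filter => /andP [].
have [Hz HLT] := exp_vec_R_inv Hg.
have Hf : is_exp cf lt (bactR (mono c) 1 g) (α, i).
  apply: exp_vec_R.
    by move=> j ji; rewrite mxE Hz // mulr0 mul0r.
  rewrite mxE mulr1 Ec addEC; have hh := LTmono HR c HLT; exact: hh.
exists (bactR (mono c) 1 g); split => //.
  by case: HM => _ _ MA; apply: MA.
by move=> f0; case: Hf; rewrite f0 mxE (cf0 (HbR HR)).
Qed.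

Lemma Syz_tens1' (f : 'rV[R]_s) h2 : Syz tens mm H (row_mx (tens1 tens f) h2) ->
  Syz tens mm H (row_mx (map_mx (fun r => tens 1 r) f) h2).
Proof.
move=> hS; rewrite /Syz vmul_row_mx -Hi (_ : mmv mm (map_mx _ f) = f).
  by move: hS; rewrite /Syz vmul_row_mx.
by apply/matrixP => i j; rewrite !mxE (mm_tens1' Hmm).
Qed.

Lemma exp_forth (ltE : expo n * expo n -> expo n * expo n -> Prop) e :
  (ltE = star_lt le \/ ltE = c_lt le \/ ltE = lowstar_lt le \/ ltE = lowc_lt le) ->
  exp_cond (coefEnv cf2) ltE shiftEnv (Syz tens mm H) hs ->
  Exp_set cf lt M e ->
  exists2 g, g \in [seq g <- Gs | g != 0] &
     exists eg, [/\ is_exp cf lt g eg, eg.2 = e.2 & shiftR eg.1 e.1].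
Proof.
move=> HltE Hsyz [f [Mf fn Hf]]; case: e Hf => α i Hf.
have [Hz HLT] := exp_vec_R_inv Hf.
have [h2 Hs2] := (Hii f).1 Mf.
have key : forall (u : 'rV[Renv]_(s + p)) e1, Syz tens mm H u ->
    is_exp (coefEnv cf2) ltE u (e1, lshift p i) ->
    exists2 g, g \in hs & exists eg, [/\ is_exp (coefEnv cf2) ltE g eg, eg.2 = lshift p i & shiftEnv eg.1 e1].
  move=> u e1 Su Hu; apply: (Hsyz (e1, lshift p i)).1; exists u; split => // u0.
  by case: Hu; rewrite u0 mxE /coefEnv (cf0 (Hb2 Henv)).
have HbigR : forall kk : 'I_(s + p), (s <= kk)%N -> (lshift p i < kk)%N.
  by move=> kk sk /=; exact: leq_trans (ltn_ord i) sk.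
case: (classic (ltE = star_lt le \/ ltE = c_lt le)) => [G1|G2].
- have P1 : forall a b a1, ltE (a, b) (a1, zeroE) -> lt (addE a (revE b)) a1.
    move=> a b a1; case: G1 => ->; rewrite /star_lt /c_lt /= revE0.
      case=> [h|[-> h]]; last by rewrite revE0 addE0.
      by case: (not_lt0 HR h).
    rewrite addE0; case=> [//|[_ h]]; by case: (not_lt0 HR h).
  have Q1 : forall a, lt a α -> ltE (a, zeroE) (α, zeroE).
    move=> a h; case: G1 => ->; rewrite /star_lt /c_lt /=; first by right.
    by left; rewrite revE0 !addE0.
  set u := row_mx (tens1 tens f) h2.
  have Hu : is_exp (coefEnv cf2) ltE u ((α, zeroE), lshift p i).
    apply: is_expI => /=.
      rewrite row_mxEl mxE /coefEnv (cf2_tens_l HR Henv) revE0 eqxx mul1r; exact: HLT.1.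
    move=> kk d nzd; case: (splitP kk) => [j Hj|j Hj]; last by left; apply: HbigR; rewrite Hj leq_addr.
    have ekk : kk = lshift p j by apply: ord_inj.
    subst kk; move: nzd; rewrite row_mxEl mxE /coefEnv (cf2_tens_l HR Henv).
    case: (eqVneq (revE d.2) zeroE) => [d2|]; last by rewrite mul0r.
    rewrite mul1r => nz; have d20 : d.2 = zeroE := revE_eq0 d2.
    case: (ltngtP j i) => [ji|ij|ji].
    + by move: nz; rewrite Hz // (cf0 (HbR HR)).
    + by left.
    + have ej : j = i := ord_inj ji; subst j; right; split => //.
      have dle := HLT.2 _ nz.
      case: (classic (d.1 = α)) => [e1|ne].
        by left; case: d d20 e1 {nz dle d2} => /= ? ? -> ->.
      right; case: d d20 ne dle {nz d2} => /= a b -> ne dle; apply: Q1; by split.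
  have [g gin [[[a1 b1] i1] [Hg /= eg2 [c [d [/= Ec Ed]]]]]] := key _ _ Hs2 Hu.
  subst i1; have b10 : b1 = zeroE := addE_eq0 Ed; subst b1.
  have [Hgz [Hgnz Hgot]] := exp_env_inv Hg.
  have [g' g'in Hg'] : exists2 g', g' \in [seq g <- Gs | g != 0] & is_exp cf lt g' (addE a1 zeroE, i).
    apply: from_g gin Hgz _ _; first by move: Hgnz; rewrite /= revE0.
    move=> ab abn abnz; case: (Hgot ab abnz) => [[e1 e2]|/P1].
      case: abn; case: ab e1 e2 {abnz} => a b /= -> e2; congr (_, _).
      by rewrite -(revEK b) e2 revE0.
    by rewrite revEK addE0.
  exists g' => //; exists (a1, i); split => //; last by exists c.
  by rewrite addE0 in Hg'.
- have G2' : ltE = lowstar_lt le \/ ltE = lowc_lt le.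
    case: HltE => [h|[h|h]] //; case: G2; by [left|right].
  have P2 : forall a b b1, ltE (a, b) (zeroE, b1) -> lt (addE a (revE b)) (revE b1).
    move=> a b b1; case: G2' => ->; rewrite /lowstar_lt /lowc_lt /=.
      by case=> [/(not_lt0 HR) //|[-> h]]; rewrite add0E.
    by case=> [|[_ /(not_lt0 HR) //]]; rewrite add0E.
  have Q2 : forall a, lt a α -> ltE (zeroE, revE a) (zeroE, revE α).
    move=> a h; case: G2' => ->; rewrite /lowstar_lt /lowc_lt /=; first by right; rewrite !revEK.
    by left; rewrite !revEK !add0E.
  set u := row_mx (map_mx (fun r => tens 1 r) f) h2.
  have Su : Syz tens mm H u by apply: Syz_tens1'.
  have Hu : is_exp (coefEnv cf2) ltE u ((zeroE, revE α), lshift p i).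
    apply: is_expI => /=.
      rewrite row_mxEl mxE /coefEnv (cf2_tens_r HR Henv) revEK eqxx mul1r; exact: HLT.1.
    move=> kk d nzd; case: (splitP kk) => [j Hj|j Hj]; last by left; apply: HbigR; rewrite Hj leq_addr.
    have ekk : kk = lshift p j by apply: ord_inj.
    subst kk; move: nzd; rewrite row_mxEl mxE /coefEnv (cf2_tens_r HR Henv).
    case: (eqVneq d.1 zeroE) => [d1|]; last by rewrite mul0r.
    rewrite mul1r => nz.
    case: (ltngtP j i) => [ji|ij|ji].
    + by move: nz; rewrite Hz // (cf0 (HbR HR)).
    + by left.
    + have ej : j = i := ord_inj ji; subst j; right; split => //.
      have dle := HLT.2 _ nz.
      case: (classic (revE d.2 = α)) => [e1|ne].
        by left; case: d d1 e1 {nz dle} => /= ? b -> <-; rewrite revEK.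
      right; case: d d1 ne dle {nz} => /= a b -> ne dle.
      by rewrite -(revEK b); apply: Q2; split.
  have [g gin [[[a1 b1] i1] [Hg /= eg2 [c [d [/= Ec Ed]]]]]] := key _ _ Su Hu.
  subst i1; have a10 : a1 = zeroE := addE_eq0 Ec; subst a1.
  have [Hgz [Hgnz Hgot]] := exp_env_inv Hg.
  have [g' g'in Hg'] : exists2 g', g' \in [seq g <- Gs | g != 0] & is_exp cf lt g' (addE zeroE (revE b1), i).
    apply: from_g gin Hgz _ _; first by move: Hgnz.
    move=> ab abn abnz; case: (Hgot ab abnz) => [[e1 e2]|/P2].
      case: abn; case: ab e1 e2 {abnz} => a b /= -> e2; congr (_, _).
      by rewrite -(revEK b) e2.
    by rewrite revEK add0E.
  exists g' => //; exists (revE b1, i); split => //; first by rewrite add0E in Hg'.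
  exists (revE d); by rewrite /= -revED -Ed revEK.
Qed.

End Part2.
End Main.


Unset Implicit Arguments.
Set Strict Implicit.
Set Printing Implicit Defensive.

Theorem mainTheorem7
  (k : fieldType) (n : nat)
  (* the PBW algebra R = k{x_1..x_n; Q, le}, with coordinates cf in the standard monomials *)
  (R : algType k) (x : 'I_n -> R) (qc : 'I_n -> 'I_n -> k) (pc : 'I_n -> 'I_n -> R)
  (le : expo n -> expo n -> Prop) (cf : R -> expo n -> k)
  (HR : is_PBW x qc pc le cf)
  (* R^env = R (x)_k R^op, with a (x) b = tens a b and coordinates cf2 *)
  (Renv : algType k) (tens : R -> R -> Renv) (cf2 : Renv -> expo n * expo n -> k)
  (Henv : is_env x tens cf2)
  (* the multiplication map m : R^env -> R *)
  (mm : {linear Renv -> R}) (Hmm : is_mult tens mm)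
  (s : nat) (M : 'rV[R]_s -> Prop) (HM : subbimodule M)
  (p q : nat) (hp : (0 < p)%N) (hq : (0 < q)%N) (H : 'M[R]_(s + p, q))
  (Hi : forall h : 'rV[Renv]_s,
      vmul tens mm (tens1 tens (mmv mm h)) (usubmx H) = vmul tens mm h (usubmx H))
  (Hii : forall f : 'rV[R]_s,
      M f <-> exists h2 : 'rV[Renv]_p, Syz tens mm H (row_mx (tens1 tens f) h2))
  (hs : seq 'rV[Renv]_(s + p)) :
  let Gs := [seq mmv mm (lsubmx h) | h <- hs] in
  ((forall h, Syz tens mm H h <-> bigenE tens hs h) ->
     forall f, M f <-> bigenR Gs f) /\
  (forall ltE : expo n * expo n -> expo n * expo n -> Prop,
     ltE = star_lt le \/ ltE = c_lt le \/ ltE = lowstar_lt le \/ ltE = lowc_lt le ->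
     (forall h, Syz tens mm H h <-> bigenE tens hs h) ->
     GB (coefEnv cf2) ltE shiftEnv (@lgenE _ Renv (s + p)) (Syz tens mm H) hs ->
     GB cf (strict le) shiftR (@bigenR _ R s) M [seq g <- Gs | g != 0]).
Proof.
move=> Gs; rewrite /Gs; split.
  by move=> HS f; apply: (part1 Henv Hmm HM Hi Hii HS).
move=> ltE HltE HS [HGB1 HGB2 HGB3]; split.
- move=> g; rewrite mem_filter => /andP [gn gin]; split; last exact/eqP.
  exact: (GsM Henv Hi Hii HS gin).
- by move=> f; rewrite -filter_gen; apply: (part1 Henv Hmm HM Hi Hii HS).
- move=> e; split.
    exact: (exp_forth HR Henv Hmm Hi Hii HltE HGB3).
  exact: (exp_back HR Henv HM Hi Hii HS).
Qed.
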